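(* Let $G=(A\cup B,E)$ be a bipartite graph containing distinct vertices $a_1,a_2,a_3,a_4\in A$ and distinct $b_1,b_2\in B$ with $a_1b_1\in E$, $a_2b_1\notin E$, $a_2b_2\in E$, $a_3b_1\in E$, $a_3b_2\notin E$, $a_4b_2\in E$ (the adjacencies $a_1b_2$ and $a_4b_1$ being arbitrary). Then there exists an ordering $\sigma_A$ of $A$ such that $G$ admits no Stick representation in which, ordering the horizontal segments by where they touch the ground line from left to right, the $i$th horizontal segment corresponds to the $i$th vertex of $\sigma_A$.
   Context: A Stick representation of a bipartite graph $G=(A\cup B,E)$ (with $A$ horizontal and $B$ vertical) assigns to each vertex of $A$ a horizontal segment and to each vertex of $B$ a vertical segment such that the left endpoints of all horizontal segments and the bottom endpoints of all vertical segments lie on a fixed ground line $\ell$ of slope $-1$, and a horizontal and a vertical segment intersect if and only if the corresponding vertices are adjacent in $G$. *)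

(* Defs.v *)
From HB Require Import structures.
From mathcomp Require Import all_boot all_order all_algebra.
From mathcomp Require Import reals.
Set Implicit Arguments. Unset Strict Implicit. Unset Printing Implicit Defensive.
Import Order.TTheory GRing.Theory Num.Theory.
Local Open Scope ring_scope.

(* The ground line l is the line y = -x (slope -1); the point of l with
   abscissa t is (t, -t). *)
Definition on_hseg (R : realType) (xa la : R) (p : R * R) : Prop :=
  p.2 = - xa /\ xa <= p.1 /\ p.1 <= xa + la.

Definition on_vseg (R : realType) (xb lb : R) (p : R * R) : Prop :=
  p.1 = xb /\ - xb <= p.2 /\ p.2 <= - xb + lb.

Definition segs_intersect (R : realType) (xa la xb lb : R) : Prop :=
  exists p : R * R, on_hseg xa la p /\ on_vseg xb lb p.

Definition stick_rep (R : realType) (A B : finType) (E : A -> B -> bool)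
  (xA lA : A -> R) (xB lB : B -> R) : Prop :=
  (forall a, 0 < lA a) /\ (forall b, 0 < lB b) /\
  (forall a b, E a b <-> segs_intersect (xA a) (lA a) (xB b) (lB b)).

Definition ordering (A : finType) (s : seq A) : Prop :=
  perm_eq s (enum A).

Definition respects_order (R : realType) (A : finType) (s : seq A)
  (xA : A -> R) : Prop :=
  sorted (fun u v : R => u < v) [seq xA a | a <- s].

(* Main.v *)
Require Import Defs.
From HB Require Import structures.
From mathcomp Require Import all_boot all_order all_algebra.
From mathcomp Require Import reals.
From mathcomp Require Import lra.
Import Order.TTheory GRing.Theory Num.Theory.
Local Open Scope ring_scope.

Lemma inter_E {R : realType} {xa la xb lb : R} :
  segs_intersect xa la xb lb -> xa <= xb /\ xb <= xa + la /\ xb - lb <= xa.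
Proof.
case=> [[p1 p2]] [[/= h1 [h2 h3]] [/= h4 [h5 h6]]]; subst; lra.
Qed.

Lemma inter_I {R : realType} {xa la xb lb : R} :
  xa <= xb -> xb <= xa + la -> xb - lb <= xa -> segs_intersect xa la xb lb.
Proof.
move=> h1 h2 h3; exists (xb, - xa); rewrite /on_hseg /on_vseg /=; lra.
Qed.

Theorem mainTheorem7 (R : realType) (A B : finType) (E : A -> B -> bool)
  (a1 a2 a3 a4 : A) (b1 b2 : B) :
  uniq [:: a1; a2; a3; a4] -> b1 != b2 ->
  E a1 b1 -> ~~ E a2 b1 -> E a2 b2 -> E a3 b1 -> ~~ E a3 b2 -> E a4 b2 ->
  exists sigmaA : seq A, ordering sigmaA /\
    ~ (exists (xA lA : A -> R) (xB lB : B -> R),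
         stick_rep E xA lA xB lB /\ respects_order sigmaA xA).
Proof.
move=> hu _ e11 e21 e22 e31 e32 e42.
set l := [:: a1; a2; a3; a4].
exists (l ++ [seq x <- enum A | x \notin l]); split.
  apply: uniq_perm.
  - rewrite cat_uniq hu filter_uniq ?enum_uniq // andbT.
    apply/hasPn => x; rewrite mem_filter => /andP[] //.
  - exact: enum_uniq.
  - move=> x; rewrite mem_cat mem_filter !mem_enum andbT.
    by case: (x \in l).
case=> xA [lA [xB [lB [[hA [hB hE]] hs]]]].
move: hs; rewrite /respects_order map_cat => /cat_sorted2 [] /= + _.
case/and4P => s12 s23 s34 _.
have [p11 [q11 r11]] := inter_E ((hE a1 b1).1 e11).
have [p31 [q31 r31]] := inter_E ((hE a3 b1).1 e31).
have [p22 [q22 r22]] := inter_E ((hE a2 b2).1 e22).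
have [p42 [q42 r42]] := inter_E ((hE a4 b2).1 e42).
have n21 : xA a2 + lA a2 < xB b1.
  rewrite ltNge; apply/negP => h; move/negP: e21; apply.
  apply/hE; apply: inter_I; lra.
have n32 : xA a3 + lA a3 < xB b2.
  rewrite ltNge; apply/negP => h; move/negP: e32; apply.
  apply/hE; apply: inter_I; lra.
lra.
Qed.
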